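(* Let $n>2k\geq 4$ be integers. Suppose that $\mathcal{F},\mathcal{G}\subset\binom{[n]}{k}$ are non-trivial and cross-intersecting. If $\min\{|\mathcal{F}(\hat{1})|,|\mathcal{G}(\hat{1})|\}>\binom{n-2}{k-2}$, then \[ |\mathcal{F}||\mathcal{G}|\leq\left(\binom{n-1}{k-1}-\binom{n-k-1}{k-1}+1\right)^2. \]
   Context: $[n]=\{1,\ldots,n\}$ and $\binom{[n]}{k}$ is the family of its $k$-subsets. Families $\mathcal{F},\mathcal{G}$ are cross-intersecting if $F\cap G\neq\emptyset$ for all $F\in\mathcal{F},G\in\mathcal{G}$; a family is non-trivial if the intersection of all its members is empty. $\mathcal{H}(\hat{1})=\{H\in\mathcal{H}\colon 1\in H\}$. *)

(* Defs.v *)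
From mathcomp Require Import all_boot.
Set Implicit Arguments. Unset Strict Implicit. Unset Printing Implicit Defensive.

(* Ground set [n] = {1,...,n} is modelled by 'I_n = {0,...,n-1}; the paper's
   element i corresponds to the ordinal i-1. *)

Definition k_uniform (n k : nat) (F : {set {set 'I_n}}) : Prop :=
  forall A, A \in F -> #|A| = k.

Definition cross_intersecting (n : nat) (F G : {set {set 'I_n}}) : Prop :=
  forall A B, A \in F -> B \in G -> A :&: B != set0.

Definition non_trivial (n : nat) (F : {set {set 'I_n}}) : Prop :=
  \bigcap_(A in F) A = set0.

(* H(\hat x) = { H in H : x in H } *)
Definition star (n : nat) (F : {set {set 'I_n}}) (x : 'I_n) : {set {set 'I_n}} :=
  [set A in F | x \in A].

(* Main.v *)
Require Import Defs.
From mathcomp Require Import all_boot.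
From mathcomp Require Import zify.
Set Implicit Arguments. Unset Strict Implicit. Unset Printing Implicit Defensive.

Section Shadow.
Variable T : finType.
Implicit Types (F G : {set {set T}}) (d e : {set T}) (X : {set T}) (x j : T).

Definition shadow (u : nat) F : {set {set T}} :=
  [set e : {set T} | (#|e| == u) && [exists d in F, e \subset d]].
Definition unif (t : nat) F := forall d, d \in F -> #|d| = t.
Definition onX X F := forall d, d \in F -> d \subset X.
Definition xshifted x F :=
  forall d j, d \in F -> x \notin d -> j \in d -> x |: (d :\ j) \in F.
Definition lnk x F : {set {set T}} := [set d :\ x | d in [set d in F | x \in d]].
Definition del x F : {set {set T}} := [set d in F | x \notin d].

Lemma shadowP u F e :
  reflect (#|e| = u /\ exists2 d, d \in F & e \subset d) (e \in shadow u F).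
Proof.
rewrite inE; apply: (iffP andP) => [[/eqP -> /existsP [d /andP [dF ed]]]|[-> [d dF ed]]].
  by split=> //; exists d.
by split=> //; apply/existsP; exists d; rewrite dF.
Qed.

Lemma shadowS u F G : F \subset G -> shadow u F \subset shadow u G.
Proof.
move=> /subsetP FG; apply/subsetP => e /shadowP [eu [d dF ed]].
by apply/shadowP; split=> //; exists d => //; apply: FG.
Qed.

Lemma shadow_shadow u v F : shadow u (shadow v F) \subset shadow u F.
Proof.
apply/subsetP => e /shadowP [eu [e' /shadowP [_ [d dF e'd]] ee']].
by apply/shadowP; split=> //; exists d => //; apply: subset_trans e'd.
Qed.

Lemma shadow_unif u F : unif u F -> shadow u F = F.
Proof.
move=> uF; apply/setP => e; apply/idP/idP => [/shadowP [eu [d dF ed]]|eF].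
  have E : e == d.
    by rewrite eqEcard ed (uF d dF) eu leqnn.
  by rewrite (eqP E).
by apply/shadowP; split; [apply: uF | exists e].
Qed.

Lemma card_shadow_ge1 u F d : d \in F -> 'C(#|d|, u) <= #|shadow u F|.
Proof.
move=> dF; rewrite -cards_draws; apply: subset_leq_card.
apply/subsetP => e; rewrite inE => /andP [ed /eqP eu].
by apply/shadowP; split=> //; exists d.
Qed.

Lemma shadow_nonempty u F d : d \in F -> u <= #|d| -> 0 < #|shadow u F|.
Proof.
move=> dF ud; apply: leq_trans (card_shadow_ge1 u dF).
by rewrite bin_gt0.
Qed.

Lemma card_split x F : #|F| = #|lnk x F| + #|del x F|.
Proof.
rewrite /lnk card_in_imset; last first.
  move=> d1 d2; rewrite !inE => /andP [_ x1] /andP [_ x2] e.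
  by rewrite -(setD1K x1) -(setD1K x2) e.
rewrite -(cardsID [set d : {set T} | x \in d] F); congr (_ + _); apply: eq_card => d;
  by rewrite !inE andbC.
Qed.

Lemma lnk_unif t x F : unif t F -> unif t.-1 (lnk x F).
Proof.
move=> tF d' /imsetP [d]; rewrite inE => /andP [dF xd] ->.
by rewrite -(tF d dF) (cardsD1 x d) xd.
Qed.

Lemma del_unif t x F : unif t F -> unif t (del x F).
Proof. by move=> tF d; rewrite inE => /andP [dF _]; apply: tF. Qed.

Lemma lnk_on X x F : onX X F -> onX (X :\ x) (lnk x F).
Proof.
move=> XF d' /imsetP [d]; rewrite inE => /andP [dF xd] ->.
by apply: setSD; apply: XF.
Qed.

Lemma del_on X x F : onX X F -> onX (X :\ x) (del x F).
Proof.
by move=> XF d; rewrite inE => /andP [dF xd]; rewrite subsetD1 xd XF.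
Qed.

Lemma lnk_notin x F d : d \in lnk x F -> x \notin d.
Proof. by move=> /imsetP [d0 _ ->]; rewrite !inE eqxx. Qed.

Lemma split_shadow_ge u x F :
  #|shadow u (lnk x F)| + #|shadow u.+1 (lnk x F)| <= #|shadow u.+1 F|.
Proof.
set S1 := [set x |: e | e in shadow u (lnk x F)].
set S2 := shadow u.+1 (lnk x F).
have cS1 : #|S1| = #|shadow u (lnk x F)|.
  apply: card_in_imset => e1 e2 /shadowP [_ [d1 d1F e1d]] /shadowP [_ [d2 d2F e2d]] E.
  have x1 : x \notin e1 by apply: contra (lnk_notin d1F); apply: (subsetP e1d).
  have x2 : x \notin e2 by apply: contra (lnk_notin d2F); apply: (subsetP e2d).
  by rewrite -(setU1K x1) -(setU1K x2) E.
have dis : S1 :&: S2 = set0.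
  apply/setP => e; rewrite inE [e \in set0]inE; apply/negbTE/andP => [[/imsetP [e0 _ ->] /shadowP [_ [d dF ed]]]].
  by move: (lnk_notin dF); rewrite (subsetP ed) // setU11.
rewrite -cS1 -[#|S2|]/#|S2|.
have -> : #|S1| + #|S2| = #|S1 :|: S2|.
  by rewrite cardsU dis cards0 subn0.
apply: subset_leq_card; apply/subsetP => e; rewrite inE => /orP [/imsetP [e0 /shadowP [e0u [d' d'F e0d]] ->]|/shadowP [eu [d' d'F ed]]].
  move: d'F => /imsetP [d]; rewrite inE => /andP [dF xd] dd.
  have xe0 : x \notin e0 by apply/negP => /(subsetP e0d); rewrite dd !inE eqxx.
  apply/shadowP; split; first by rewrite cardsU1 xe0 e0u.
  exists d => //; rewrite subUset sub1set xd /=; apply: subset_trans e0d _.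
  by rewrite dd subsetDl.
move: d'F => /imsetP [d]; rewrite inE => /andP [dF xd] dd.
apply/shadowP; split=> //; exists d => //; apply: subset_trans ed _.
by rewrite dd subsetDl.
Qed.

Lemma shifted_shadow_sub w t x F :
  xshifted x F -> unif t F -> w < t -> shadow w (del x F) \subset shadow w (lnk x F).
Proof.
move=> sF tF wt; apply/subsetP => e /shadowP [ew [d]]; rewrite inE => /andP [dF xd] ed.
have [j /andP [jd je]] : exists j, (j \in d) && (j \notin e).
  apply/existsP; apply: contraLR wt; rewrite negb_exists => /forallP H.
  rewrite -leqNgt -ew -(tF d dF); apply: subset_leq_card; apply/subsetP => y yd.
  by move: (H y); rewrite yd /= negbK.
apply/shadowP; split=> //; exists (d :\ j).
  have -> : d :\ j = (x |: (d :\ j)) :\ x by rewrite setU1K // !inE negb_and xd orbT.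
  by apply: imset_f; rewrite inE sF // setU11.
by rewrite subsetD1 ed je.
Qed.

End Shadow.

Section Comp.
Variable T : finType.
Implicit Types (F G : {set {set T}}) (A d e g : {set T}) (X : {set T}) (a b x j : T).

Definition sh1 x j d := if (j \in d) && (x \notin d) then x |: (d :\ j) else d.
Definition comp x j F : {set {set T}} :=
  [set (if sh1 x j d \in F then d else sh1 x j d) | d in F].

Lemma swap_card a b A : a \in A -> b \notin A -> #|b |: (A :\ a)| = #|A|.
Proof.
move=> aA bA; rewrite cardsU1 (cardsD1 a A) aA !inE negb_and bA orbT.
by rewrite add1n.
Qed.

Lemma sh1_inj x j d1 d2 : (j \in d1) && (x \notin d1) -> (j \in d2) && (x \notin d2) ->
  x |: (d1 :\ j) = x |: (d2 :\ j) -> d1 = d2.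
Proof.
move=> /andP [j1 x1] /andP [j2 x2] E.
have n1 : x \notin d1 :\ j by rewrite !inE negb_and x1 orbT.
have n2 : x \notin d2 :\ j by rewrite !inE negb_and x2 orbT.
by rewrite -(setD1K j1) -(setD1K j2) -(setU1K n1) -(setU1K n2) E.
Qed.

Lemma card_comp x j F : #|comp x j F| = #|F|.
Proof.
apply: card_in_imset => d1 d2 d1F d2F.
have key : forall d, d \in F -> sh1 x j d \notin F -> sh1 x j d != d.
  by move=> d dF; apply: contra => /eqP ->.
case: ifP => s1; case: ifP => s2 //.
- by move=> E; move: s2; rewrite -E d1F.
- by move=> E; move: s1; rewrite E d2F.
move: s1 s2; rewrite /sh1; case: ifP => c1; case: ifP => c2 //.
- by move=> _ _; apply: sh1_inj.
- by rewrite d2F.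
- by rewrite d1F.
Qed.

Lemma comp_unif t x j F : unif t F -> unif t (comp x j F).
Proof.
move=> tF g /imsetP [d dF ->]; case: ifP => _; first exact: tF.
rewrite /sh1; case: ifP => [/andP [jd xd]|_]; last exact: tF.
by rewrite swap_card // tF.
Qed.

Lemma comp_on X x j F : x \in X -> onX X F -> onX X (comp x j F).
Proof.
move=> xX XF g /imsetP [d dF ->]; case: ifP => _; first exact: XF.
rewrite /sh1; case: ifP => _; last exact: XF.
by rewrite subUset sub1set xX (subset_trans (subsetDl _ _) (XF d dF)).
Qed.

Lemma sh1_src x j d : j \in d -> x \notin d -> sh1 x j d = x |: (d :\ j).
Proof. by move=> jd xd; rewrite /sh1 jd xd. Qed.

Lemma sh1_nsrc x j d : ~~ ((j \in d) && (x \notin d)) -> sh1 x j d = d.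
Proof. by rewrite /sh1 => /negbTE ->. Qed.

Lemma memcompP x j F g :
  reflect (exists2 d, d \in F & g = if sh1 x j d \in F then d else sh1 x j d)
          (g \in comp x j F).
Proof. exact: (iffP imsetP). Qed.

Section Neq.
Variables (x j : T).
Hypothesis xj : x != j.

Lemma swap_back d : j \in d -> x \notin d -> j |: ((x |: (d :\ j)) :\ x) = d.
Proof.
move=> jd xd; rewrite setU1K ?setD1K // !inE negb_and xd orbT //.
Qed.

Lemma swap_fwd g : x \in g -> j \notin g -> x |: ((j |: (g :\ x)) :\ j) = g.
Proof.
move=> xg jg; rewrite setU1K ?setD1K // !inE negb_and jg orbT //.
Qed.

Lemma comp_tgt F g : x \in g -> j \notin g ->
  (g \in comp x j F) = (g \in F) || (j |: (g :\ x) \in F).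
Proof.
move=> xg jg; apply/memcompP/idP => [[d dF]|].
  case: (boolP ((j \in d) && (x \notin d))) => [/andP [jd xd]|ns].
    rewrite sh1_src //; case: ifP => _ Eg.
      by move: xd; rewrite -Eg xg.
    by rewrite Eg swap_back // dF orbT.
  by rewrite sh1_nsrc //; case: ifP => _ ->; rewrite dF.
case gF: (g \in F) => /=; [move=> _ | move=> dF].
  by exists g => //; rewrite sh1_nsrc ?(negbTE jg) // gF.
exists (j |: (g :\ x)) => //.
have jd : j \in j |: (g :\ x) by rewrite setU11.
have xd : x \notin j |: (g :\ x) by rewrite !inE negb_or xj eqxx.
by rewrite sh1_src // swap_fwd // gF.
Qed.

Lemma comp_src F g : j \in g -> x \notin g ->
  (g \in comp x j F) = (g \in F) && (x |: (g :\ j) \in F).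
Proof.
move=> jg xg; apply/memcompP/idP => [[d dF]|/andP [gF sF]].
  case: (boolP ((j \in d) && (x \notin d))) => [/andP [jd xd]|ns].
    rewrite sh1_src //; case: ifP => sF Eg.
      by rewrite Eg dF sF.
    by move: xg; rewrite Eg setU11.
  rewrite sh1_nsrc //; case: ifP => _ Eg.
    by move: ns; rewrite -Eg jg xg.
  by move: ns; rewrite -Eg jg xg.
by exists g => //; rewrite sh1_src // sF.
Qed.

Lemma comp_neu F g : (x \in g) = (j \in g) -> (g \in comp x j F) = (g \in F).
Proof.
move=> xjg; apply/memcompP/idP => [[d dF]|gF].
  case: (boolP ((j \in d) && (x \notin d))) => [/andP [jd xd]|ns].
    rewrite sh1_src //; case: ifP => _ Eg; first by rewrite Eg.
    move: xjg; rewrite Eg setU11 !inE eqxx /= => /esym.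
    by rewrite eq_sym (negbTE xj).
  by rewrite sh1_nsrc //; case: ifP => _ ->.
exists g => //; rewrite sh1_nsrc; first by case: ifP.
by rewrite -xjg andbN.
Qed.

Lemma shadow_comp_sub u F : shadow u (comp x j F) \subset comp x j (shadow u F).
Proof.
apply/subsetP => e /shadowP [eu [d dC ed]].
have inS : forall d0, d0 \in F -> e \subset d0 -> e \in shadow u F.
  by move=> d0 d0F ed0; apply/shadowP; split => //; exists d0.
case: (boolP ((x \in e) && (j \notin e))) => [/andP [xe je]|nt].
  rewrite comp_tgt //.
  have xd : x \in d by apply: (subsetP ed).
  case jd: (j \in d).
    by move: dC; rewrite comp_neu ?xd ?jd // => dF; rewrite (inS d).
  move: dC; rewrite comp_tgt ?jd // => /orP [dF|dF]; first by rewrite (inS d).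
  apply/orP; right; apply/shadowP; split; first by rewrite swap_card.
  by exists (j |: (d :\ x)) => //; apply: setUS; apply: setSD.
case: (boolP ((j \in e) && (x \notin e))) => [/andP [je xe]|ns].
  rewrite comp_src //.
  have jd : j \in d by apply: (subsetP ed).
  have sw : #|x |: (e :\ j)| = u by rewrite swap_card.
  case xd: (x \in d).
    move: dC; rewrite comp_neu ?xd ?jd // => dF.
    rewrite (inS d) //=; apply/shadowP; split => //; exists d => //.
    by rewrite subUset sub1set xd (subset_trans (subsetDl _ _) ed).
  move: dC; rewrite comp_src ?xd ?jd // => /andP [dF sF].
  rewrite (inS d) //=; apply/shadowP; split => //; exists (x |: (d :\ j)) => //.
  by apply: setUS; apply: setSD.
have xje : (x \in e) = (j \in e).
  by move: nt ns; case: (x \in e); case: (j \in e).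
rewrite comp_neu //.
case: (boolP ((x \in d) && (j \notin d))) => [/andP [xd jd]|nt'].
  move: dC; rewrite comp_tgt // => /orP [dF|dF]; first by rewrite (inS d).
  apply: (inS _ dF); apply/subsetP => y ye; rewrite !inE.
  have yd := subsetP ed y ye.
  case: (eqVneq y x) => [yx|]; last by rewrite yd orbT.
  by move: ye jd; rewrite yx xje => je; rewrite (subsetP ed _ je).
case: (boolP ((j \in d) && (x \notin d))) => [/andP [jd xd]|ns'].
  by move: dC; rewrite comp_src // => /andP [dF _]; rewrite (inS d).
have xjd : (x \in d) = (j \in d).
  by move: nt' ns'; case: (x \in d); case: (j \in d).
by move: dC; rewrite comp_neu // => dF; rewrite (inS d).
Qed.

Lemma card_shadow_comp u F : #|shadow u (comp x j F)| <= #|shadow u F|.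
Proof. by rewrite -(card_comp x j (shadow u F)); apply: subset_leq_card; apply: shadow_comp_sub. Qed.

Lemma del_comp_sub F : del x (comp x j F) \subset del x F.
Proof.
apply/subsetP => g; rewrite !inE => /andP [gC xg]; rewrite xg andbT.
case: (boolP (j \in g)) => jg.
  by move: gC; rewrite comp_src // => /andP [].
by move: gC; rewrite comp_neu // (negbTE xg) (negbTE jg).
Qed.

Lemma del_comp_proper F d : d \in F -> j \in d -> x \notin d -> x |: (d :\ j) \notin F ->
  del x (comp x j F) \proper del x F.
Proof.
move=> dF jd xd sF; rewrite properE del_comp_sub /=; apply/subsetPn; exists d.
  by rewrite inE dF xd.
by rewrite inE comp_src // (negbTE sF) andbF.
Qed.

End Neq.

Lemma shift_exists X x t F : x \in X -> onX X F -> unif t F ->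
  exists F', [/\ #|F'| = #|F|, onX X F', unif t F', xshifted x F'
             & forall u, #|shadow u F'| <= #|shadow u F|].
Proof.
move=> xX; have [n] := ubnP #|del x F|; elim: n F => // n IH F ltn XF tF.
case: (boolP [forall d in F, forall j in d, (x \notin d) ==> (x |: (d :\ j) \in F)]) => H.
  exists F; split => // d j dF xd jd.
  move/forallP: H => /(_ d); rewrite dF /= => /forallP /(_ j); rewrite jd /=.
  by rewrite xd.
move: H; rewrite negb_forall => /existsP [d]; rewrite negb_imply => /andP [dF].
rewrite negb_forall => /existsP [j]; rewrite negb_imply => /andP [jd].
rewrite negb_imply => /andP [xd sF].
have xj : x != j by apply: contraNneq xd => ->.
have lt' : #|del x (comp x j F)| < n.
  by apply: leq_trans (proper_card (del_comp_proper xj dF jd xd sF)) _.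
have [F' [c1 c2 c3 c4 c5]] := IH _ lt' (comp_on (j:=j) xX XF) (comp_unif (x:=x) (j:=j) tF).
exists F'; split => //; first by rewrite c1 card_comp.
by move=> u; apply: leq_trans (c5 u) (card_shadow_comp xj u F).
Qed.

End Comp.

Section Main.
Variable T : finType.
Implicit Types (F G D : {set {set T}}) (A d e g : {set T}) (X : {set T}) (x y : T).

Lemma bin_le1 a k : a <= k -> 'C(a, k) <= 1.
Proof.
rewrite leq_eqVlt => /orP [/eqP ->|lt]; first by rewrite binn.
by rewrite bin_small.
Qed.

Lemma shadow_is_unif u F : unif u (shadow u F).
Proof. by move=> e /shadowP []. Qed.

Lemma pick_set F : 0 < #|F| -> exists d, d \in F.
Proof. by rewrite card_gt0 => /set0Pn. Qed.

Lemma pick_elt A : 0 < #|A| -> exists a, a \in A.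
Proof. by rewrite card_gt0 => /set0Pn. Qed.

Lemma shadow_pos u t F : unif t F -> u <= t -> 0 < #|F| -> 0 < #|shadow u F|.
Proof.
move=> tF ut /pick_set [d dF]; apply: (shadow_nonempty (d := d)) => //.
by rewrite (tF d dF).
Qed.

Lemma lnk_nonempty x t F : xshifted x F -> unif t F -> 0 < t -> 0 < #|F| -> 0 < #|lnk x F|.
Proof.
move=> sF tF t0 /pick_set [d dF]; rewrite card_gt0; apply/set0Pn.
case xd: (x \in d).
  by exists (d :\ x); apply: imset_f; rewrite inE dF xd.
have [y yd] : exists y, y \in d by apply: pick_elt; rewrite (tF d dF).
exists ((x |: (d :\ y)) :\ x); apply: imset_f; rewrite inE setU11 andbT.
by apply: sF => //; rewrite xd.
Qed.

Lemma kk1 a k F : 0 < #|F| -> unif k.+1 F -> 'C(a, k.+1) <= #|F| -> 'C(a, k) <= #|shadow k F|.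
Proof.
elim: a k F => [|a IH] k F F0 tF CF.
  apply: leq_trans (bin_le1 (leq0n k)) _; apply: (shadow_pos tF) => //.
case: (ltnP a k) => [ak|ka].
  by apply: leq_trans (bin_le1 ak) _; apply: (shadow_pos tF).
case: k ka tF CF => [|k] ka tF CF.
  by rewrite bin0; apply: (shadow_pos tF).
have [d dF] := pick_set F0.
have [x xd] : exists x, x \in d by apply: pick_elt; rewrite (tF d dF).
have [F' [c1 c2 c3 c4 c5]] := shift_exists (in_setT x) (fun d _ => subsetT d) tF.
set Q := lnk x F'; set R := del x F'.
have F'0 : 0 < #|F'| by rewrite c1.
have tQ : unif k.+1 Q by apply: (lnk_unif (t := k.+2)).
have tR : unif k.+2 R by apply: del_unif.
have sp := card_split x F'.
have ssg := split_shadow_ge k x F'.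
have sh5 := c5 k.+1.
case: (leqP 'C(a, k.+1) #|Q|) => [cQ|cQ].
  have Q0 : 0 < #|Q| by apply: leq_trans cQ; rewrite bin_gt0.
  have := IH k Q Q0 tQ cQ.
  move: ssg; rewrite -/Q (shadow_unif tQ) binS => ssg IHQ.
  lia.
have R0 : 'C(a, k.+2) < #|R|.
  move: CF; rewrite binS -c1 sp -/Q -/R; lia.
have := IH k.+1 R (leq_ltn_trans (leq0n _) R0) tR (ltnW R0).
have := subset_leq_card (shifted_shadow_sub (w := k.+1) c4 c3 (ltnSn _)).
rewrite -/Q -/R (shadow_unif tQ); lia.
Qed.


Lemma bin_sub_le m t u : u <= m -> u <= t -> 'C(m - u, t - u) <= 'C(m, t).
Proof.
elim: u m t => [|u IH] m t um ut; first by rewrite !subn0.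
case: m um => // m um; case: t ut => // t ut.
rewrite !subSS; apply: leq_trans (IH _ _ um ut) _.
by rewrite binS leq_addl.
Qed.

Definition Gst m := forall t u X F, #|X| = m.+1 -> onX X F -> unif t F -> u <= t ->
  #|shadow u F| < 'C(m, u) -> #|F| + 'C(m - u, t - u) <= 'C(m, t).

Lemma g_easy m t u X F : #|X| = m.+1 -> onX X F -> unif t F -> u <= t ->
  #|shadow u F| < 'C(m, u) -> (#|F| = 0 \/ u = 0 \/ u = t) ->
  #|F| + 'C(m - u, t - u) <= 'C(m, t).
Proof.
move=> cX XF tF ut cond [F0|[u0|ut']].
- rewrite F0 add0n; apply: bin_sub_le => //.
  by rewrite -bin_gt0; apply: leq_ltn_trans cond.
- case F0: (#|F| == 0).
    by rewrite (eqP F0) add0n; apply: bin_sub_le => //; rewrite u0.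
  have P : 0 < #|shadow 0 F| by apply: (shadow_pos tF (leq0n _)); rewrite lt0n F0.
  by move: cond; rewrite u0 bin0 ltnS leqn0 => /eqP E; rewrite E in P.
- subst u; move: cond; rewrite (shadow_unif tF) subnn bin0 => cond.
  by rewrite addn1.
Qed.

Lemma g_base : Gst 0.
Proof.
move=> t u X F cX XF tF ut cond; apply: (g_easy cX XF tF ut cond).
case: u ut cond => [|u] ut cond; first by right; left.
by move: cond; rewrite bin_small.
Qed.

Lemma g_step m : Gst m -> Gst m.+1.
Proof.
move=> IH t u X F cX XF tF ut cond.
case F0: (#|F| == 0); first by apply: (g_easy cX XF tF ut cond); left; apply/eqP.
case: u ut cond => [|u'] ut cond; first by apply: (g_easy cX XF tF ut cond); right; left.
case: (eqVneq u'.+1 t) => [Eu|Nu]; first by apply: (g_easy cX XF tF ut cond); right; right.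
have ult : u'.+1 < t by rewrite ltn_neqAle Nu ut.
case: t tF ut cond ult Nu => // t' tF ut cond ult Nu.
have [x xX] : exists x, x \in X by apply: pick_elt; rewrite cX.
have [F' [c1 c2 c3 c4 c5]] := shift_exists xX XF tF.
have cX' : #|X :\ x| = m.+1 by move: cX; rewrite (cardsD1 x X) xX add1n => [[]].
have F'0 : 0 < #|F'| by rewrite c1 lt0n F0.
have Q0 : 0 < #|lnk x F'| by apply: (lnk_nonempty c4 c3).
have tQ : unif t' (lnk x F') by apply: (lnk_unif (t := t'.+1)).
have tR : unif t'.+1 (del x F') by apply: del_unif.
have XQ : onX (X :\ x) (lnk x F') by apply: lnk_on.
have XR : onX (X :\ x) (del x F') by apply: del_on.
have sp := card_split x F'.
have ssg := split_shadow_ge u' x F'.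
have sh5 := c5 u'.+1.
have cond' : #|shadow u'.+1 F| < 'C(m, u'.+1) + 'C(m, u') by rewrite -binS.
case: (leqP 'C(m, u'.+1) #|shadow u'.+1 (lnk x F')|) => [c6|c6].
  have S0 : 0 < #|shadow u'.+1 (lnk x F')| by apply: (shadow_pos tQ).
  have := kk1 S0 (@shadow_is_unif u'.+1 (lnk x F')) c6.
  have := subset_leq_card (shadow_shadow u' u'.+1 (lnk x F')).
  lia.
have um : u'.+1 <= m by rewrite -bin_gt0; apply: leq_ltn_trans c6.
have H1 := IH t' u'.+1 (X :\ x) (lnk x F') cX' XQ tQ ult c6.
have sRQ := subset_leq_card (shifted_shadow_sub (w := u'.+1) c4 c3 ult).
have H2 := IH t'.+1 u'.+1 (X :\ x) (del x F') cX' XR tR ut (leq_ltn_trans sRQ c6).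
have e1 : m.+1 - u'.+1 = (m - u'.+1).+1 by rewrite subSn.
have e2 : t'.+1 - u'.+1 = (t' - u'.+1).+1 by rewrite subSn.
rewrite e1 e2 binS [X in _ <= X]binS.
move: H2; rewrite e2 => H2.
rewrite -c1 sp; lia.
Qed.

Lemma gthm m : Gst m.
Proof. by elim: m => [|m IH]; [apply: g_base | apply: g_step]. Qed.


Definition Lst n := forall p s X D, s + p = n -> #|X| = n.+1 -> onX X D -> unif s D ->
  p <= s -> 0 < #|D| -> #|shadow p D| < 'C(n, p) -> #|D| + 'C(s, p) <= #|shadow p D| + 1.

Lemma l_easy n p s X D : s + p = n -> #|X| = n.+1 -> onX X D -> unif s D ->
  p <= s -> 0 < #|D| -> #|shadow p D| < 'C(n, p) -> (p = 0 \/ p = s) ->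
  #|D| + 'C(s, p) <= #|shadow p D| + 1.
Proof.
move=> sp cX XD tD ps D0 cond [p0|ps'].
  have P : 0 < #|shadow 0 D| by apply: (shadow_pos tD (leq0n _)).
  by move: cond; rewrite p0 bin0 ltnS leqn0 => /eqP E; rewrite E in P.
by subst p; rewrite (shadow_unif tD) binn.
Qed.

Lemma l_step n : Lst n -> Lst n.+1.
Proof.
move=> IH p s X D sp cX XD tD ps D0 cond.
case: p sp ps cond => [|p'] sp ps cond; first by apply: (l_easy sp cX XD tD ps D0 cond); left.
case: (eqVneq p'.+1 s) => [Es|Ns]; first by apply: (l_easy sp cX XD tD ps D0 cond); right.
have plt : p'.+1 < s by rewrite ltn_neqAle Ns ps.
case: s sp tD ps cond plt Ns => // s' sp tD ps cond plt Ns.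
have n1 : s' + p'.+1 = n by move: sp; rewrite addSn => [[]].
have n2 : s'.+1 + p' = n by rewrite addSnnS.
have [x xX] : exists x, x \in X by apply: pick_elt; rewrite cX.
have [D' [c1 c2 c3 c4 c5]] := shift_exists xX XD tD.
have cX' : #|X :\ x| = n.+1 by move: cX; rewrite (cardsD1 x X) xX add1n => [[]].
have D'0 : 0 < #|D'| by rewrite c1.
have Q0 : 0 < #|lnk x D'| by apply: (lnk_nonempty c4 c3).
have tQ : unif s' (lnk x D') by apply: (lnk_unif (t := s'.+1)).
have tR : unif s'.+1 (del x D') by apply: del_unif.
have XQ : onX (X :\ x) (lnk x D') by apply: lnk_on.
have XR : onX (X :\ x) (del x D') by apply: del_on.
have sp' := card_split x D'.
have ssg := split_shadow_ge p' x D'.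
have sh5 := c5 p'.+1.
have cond' : #|shadow p'.+1 D| < 'C(n, p'.+1) + 'C(n, p') by rewrite -binS.
have ps' : p'.+1 <= s' by [].
case: (leqP 'C(n, p'.+1) #|shadow p'.+1 (lnk x D')|) => [c6|c6].
  have S0 : 0 < #|shadow p'.+1 (lnk x D')| by apply: (shadow_pos tQ).
  have := kk1 S0 (@shadow_is_unif p'.+1 (lnk x D')) c6.
  have := subset_leq_card (shadow_shadow p' p'.+1 (lnk x D')).
  lia.
have H1 := IH p'.+1 s' (X :\ x) (lnk x D') n1 cX' XQ tQ ps' Q0 c6.
have sRQ' := subset_leq_card (shifted_shadow_sub (w := p') c4 c3 (ltnW plt)).
have key : #|del x D'| + 'C(s', p') <= #|shadow p' (lnk x D')|.
  case R0: (#|del x D'| == 0).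
    rewrite (eqP R0) add0n.
    have [q qQ] := pick_set Q0.
    by move: (card_shadow_ge1 p' qQ); rewrite (tQ q qQ).
  have R0' : 0 < #|del x D'| by rewrite lt0n R0.
  case: (leqP 'C(n, p') #|shadow p' (del x D')|) => [c7|c7].
    have sRQ := subset_leq_card (shifted_shadow_sub (w := p'.+1) c4 c3 plt).
    have G := gthm cX' XR tR (ltnW plt) (leq_ltn_trans sRQ c6).
    have e1 : n - p'.+1 = s' by rewrite -n1 addnK.
    have e2 : s'.+1 - p'.+1 = s' - p' by rewrite subSS.
    have e3 : 'C(s', s' - p') = 'C(s', p') by rewrite bin_sub // -ltnS.
    have e4 : 'C(n, s'.+1) = 'C(n, p').
      have -> : s'.+1 = n - p' by rewrite -n2 addnK.
      by rewrite bin_sub // -n2 leq_addl.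
    move: G; rewrite e1 e2 e3 e4; lia.
  case: (posnP p') => [p0|pp].
    have P : 0 < #|shadow 0 (del x D')| by apply: (shadow_pos tR (leq0n _)).
    by move: c7; rewrite p0 bin0 ltnS leqn0 => /eqP E; rewrite E in P.
  have H2 := IH p' s'.+1 (X :\ x) (del x D') n2 cX' XR tR (ltnW ps) R0' c7.
  have b1 : 'C(s'.+1, p') = 'C(s', p') + 'C(s', p'.-1) by rewrite -{1}(prednK pp) binS prednK.
  have b2 : 0 < 'C(s', p'.-1).
    by rewrite bin_gt0; apply: leq_trans (leq_pred p') ps.
  lia.
rewrite -c1 sp' binS.
lia.
Qed.

Lemma lthm n : Lst n.
Proof.
elim: n => [|n IH].
  move=> p s X D sp cX XD tD ps D0 cond; apply: (l_easy sp cX XD tD ps D0 cond).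
  by move: sp => /eqP; rewrite addn_eq0 => /andP [/eqP -> /eqP ->]; right.
exact: l_step.
Qed.

End Main.

Section Final.
Variable T : finType.
Implicit Types (F G D : {set {set T}}) (X : {set T}) (x : T).

Lemma card_lnk x F : #|lnk x F| = #|[set d in F | x \in d]|.
Proof.
rewrite /lnk card_in_imset // => d1 d2; rewrite !inE => /andP [_ x1] /andP [_ x2] e.
by rewrite -(setD1K x1) -(setD1K x2) e.
Qed.

Lemma compK X (b : {set T}) : b \subset X -> X :\: (X :\: b) = b.
Proof.
move=> bX; apply/setP => y; rewrite !inE.
case: (boolP (y \in b)) => yb /=; first by rewrite (subsetP bX).
by case: (y \in X).
Qed.

Lemma half_bound n k F G x :
  #|T| = n -> 2 * k < n -> 2 <= k -> unif k F -> unif k G ->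
  (forall A B, A \in F -> B \in G -> A :&: B != set0) -> 0 < #|del x G| ->
  'C(n - 2, k - 2) < #|[set A in F | x \in A]| ->
  #|[set A in F | x \in A]| + #|del x G| + 'C(n - k - 1, k - 1) <= 'C(n - 1, k - 1) + 1.
Proof.
move=> cT nk k2 tF tG cFG B0 Hst.
set X := [set: T] :\ x.
set p := k - 1; set s := n - k - 1.
have cX : #|X| = (s + p).+1.
  have := cardsD1 x [set: T]; rewrite in_setT cardsT cT -/X /s /p; lia.
set A := lnk x F.
set B := del x G.
have cA : #|A| = #|[set A in F | x \in A]| by rewrite /A card_lnk.
set D := [set X :\: b | b in B].
have BX : forall b, b \in B -> b \subset X.
  move=> b; rewrite inE => /andP [_ xb]; rewrite subsetD1 xb subsetT //.
have cD : #|D| = #|B|.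
  apply: card_in_imset => b1 b2 b1B b2B E.
  by rewrite -(compK (BX _ b1B)) -(compK (BX _ b2B)) E.
have tD : unif s D.
  move=> d /imsetP [b bB ->]; rewrite cardsD (setIidPr (BX _ bB)) cX.
  move: bB; rewrite inE => /andP [bG _]; rewrite (tG b bG) /s /p; lia.
have XD : onX X D by move=> d /imsetP [b bB ->]; apply: subsetDl.
have D0 : 0 < #|D| by rewrite cD.
have tA : forall a, a \in A -> a \subset X /\ #|a| = p.
  move=> a /imsetP [d]; rewrite inE => /andP [dF xd] ->; split.
    by rewrite /X; apply: setSD; apply: subsetT.
  by have := cardsD1 x d; rewrite xd (tF d dF) /p; lia.
have disj : A :&: shadow p D = set0.
  apply/setP => a; rewrite inE [a \in set0]inE; apply/negbTE/andP => [[aA /shadowP [_ [d dD ad]]]].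
  move: dD => /imsetP [b bB db].
  move: aA => /imsetP [f]; rewrite inE => /andP [fF xf] af.
  move: bB; rewrite inE => /andP [bG xb].
  have := cFG f b fF bG; apply/negP; rewrite negbK; apply/eqP/setP => y; rewrite !inE.
  apply/negbTE/andP => [[yf yb]].
  have yx : y != x by apply: contraNneq xb => <-.
  have : y \in a by rewrite af !inE yx yf.
  by move/(subsetP ad); rewrite db !inE yb.
have sub : A :|: shadow p D \subset [set e : {set T} | e \subset X & #|e| == p].
  apply/subsetP => e; rewrite in_setU => /orP [eA|/shadowP [ep [d dD ed]]].
    by have [? ?] := tA e eA; rewrite inE; apply/andP; split => //; apply/eqP.
  by rewrite inE ep eqxx andbT; apply: subset_trans ed (XD d dD).
have tot : #|A| + #|shadow p D| <= 'C(n - 1, p).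
  have := subset_leq_card sub; rewrite cards_draws cardsU disj cards0 subn0.
  by have -> : #|X| = n - 1 by rewrite cX /s /p; lia.
have e1 : n - 1 = (s + p).+1 by rewrite /s /p; lia.
have e3 : s + p = n - 2 by rewrite /s /p; lia.
have bS : 'C(n - 1, p) = 'C(s + p, p) + 'C(n - 2, k - 2).
  rewrite e1 e3 /p; have -> : k - 1 = (k - 2).+1 by lia.
  exact: binS.
have cond : #|shadow p D| < 'C(s + p, p).
  move: tot Hst; rewrite -cA bS; lia.
have := lthm (erefl (s + p)) cX XD tD _ D0 cond.
rewrite /p /s in cA tot * => /(_ ltac:(lia)).
rewrite cD -cA; lia.
Qed.

End Final.

Lemma amgm_bound f g h : f + g <= 2 * h -> f * g <= h ^ 2.
Proof.
move=> fg.
have A : 4 * (f * g) <= (f + g) ^ 2 by case: (nat_AGM2 f g).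
have B : (f + g) ^ 2 <= (2 * h) ^ 2 by rewrite leq_exp2r.
have C : 4 * (f * g) <= 4 * h ^ 2 by move: (leq_trans A B); rewrite expnMn.
by rewrite leq_pmul2l in C.
Qed.

Lemma arith a1 a0 b1 b0 c C b : b < a1 -> a1 + b0 + c <= C + 1 -> b1 + a0 + c <= C + 1 ->
  a1 + a0 + (b1 + b0) <= 2 * (C - c + 1).
Proof. lia. Qed.

Unset Implicit Arguments.
Theorem corollary2p4 (n k : nat) (Hk : 4 <= 2 * k) (Hn : 2 * k < n)
  (F G : {set {set 'I_n}}) (x1 : 'I_n) (Hx1 : nat_of_ord x1 = 0)
  (HF : k_uniform k F) (HG : k_uniform k G)
  (HFnt : non_trivial F) (HGnt : non_trivial G)
  (Hcross : cross_intersecting F G)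
  (Hmin : 'C(n - 2, k - 2) < minn #|star F x1| #|star G x1|) :
  #|F| * #|G| <= ('C(n - 1, k - 1) - 'C(n - k - 1, k - 1) + 1) ^ 2.
Proof.
have cT : #|'I_n| = n := card_ord n.
have k2 : 2 <= k by lia.
have del_pos : forall H : {set {set 'I_n}}, non_trivial H -> 0 < #|del x1 H|.
  move=> H Hnt; rewrite card_gt0; apply/eqP => E.
  have : x1 \in \bigcap_(A in H) A.
    apply/bigcapP => A AH; apply: contraT => nx.
    have : A \in del x1 H by rewrite inE AH nx.
    by rewrite E inE.
  by rewrite Hnt inE.
have Hcross' : forall A B, A \in G -> B \in F -> A :&: B != set0.
  by move=> A B AG BF; rewrite setIC; apply: Hcross.
move: Hmin; rewrite leq_min => /andP [h1 h2].
have H1 := half_bound cT Hn k2 HF HG Hcross (del_pos G HGnt) h1.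
have H2 := half_bound cT Hn k2 HG HF Hcross' (del_pos F HFnt) h2.
have cF : #|F| = #|star F x1| + #|del x1 F| by rewrite (card_split x1 F) card_lnk.
have cG : #|G| = #|star G x1| + #|del x1 G| by rewrite (card_split x1 G) card_lnk.
apply: amgm_bound.
rewrite cF cG; exact: (arith h1 H1 H2).
Qed.
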